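(* Let $k=2$. For every word $x_0\in\Sigma_2^*$ with $x_0\neq 111$, the sequence $x_{n+1}=\mathcal P_2(x_n)$ is eventually constant equal to $1001110$, i.e. there is $N$ with $x_n=1001110$ for all $n\ge N$; and for $x_0=111$ the sequence is constant equal to $111$. In particular, the only fixed points of $\mathcal P_2$ are $111$ and $1001110$, and $\mathcal P_2$ has no cycles of length $p\ge 2$.
   Context: Fix an integer $k\ge 2$ and the alphabet $\Sigma_k=\{0,1,\dots,k-1\}$. A word is a finite nonempty string of letters of $\Sigma_k$ (leading zeros allowed); $\Sigma_k^*$ denotes the set of words. For a word $x$, $|x|$ denotes its length and $|x|_i$ the number of occurrences of the letter $i$ in $x$. For a positive integer $c$, $[c]_k$ denotes its standard base-$k$ representation without leading zeros, viewed as a word over $\Sigma_k$; it has $\lfloor\log_k c\rfloor+1$ letters. The map $\mathcal P_k:\Sigma_k^*\to\Sigma_k^*$ is defined as follows: if $b_1>b_2>\dots>b_r$ are exactly the letters occurring in $x$ (i.e. those with $|x|_{b_j}\neq 0$), then $\mathcal P_k(x)=[|x|_{b_1}]_k\,b_1\,[|x|_{b_2}]_k\,b_2\cdots[|x|_{b_r}]_k\,b_r$ (concatenation). For $k=2$, e.g. $\mathcal P_2(111)=111$ (three 1's, written $11$ in binary, followed by the letter $1$). A fixed point is a word $x$ with $\mathcal P_k(x)=x$; a cycle of length $p$ is a list of $p$ distinct words $\overline x_1,\dots,\overline x_p$ with $\mathcal P_k(\overline x_i)=\overline x_{i+1}$ for $i<p$ and $\mathcal P_k(\overline x_p)=\overline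 x_1$. *)

(* Defs.v *)
(* Words over Sigma_k are represented as seq nat whose
   letters are all < k (and nonempty). *)
From mathcomp Require Import all_boot.
Set Implicit Arguments. Unset Strict Implicit. Unset Printing Implicit Defensive.

Definition word (k : nat) (x : seq nat) : bool :=
  (0 < size x) && all (fun a => a < k) x.

Fixpoint digits_aux (fuel k c : nat) : seq nat :=
  match fuel with
  | 0 => [::]
  | f.+1 => if c == 0 then [::] else rcons (digits_aux f k (c %/ k)) (c %% k)
  end.

Definition digits (k c : nat) : seq nat := digits_aux c k c.

Definition occ_letters (k : nat) (x : seq nat) : seq nat :=
  [seq b <- rev (iota 0 k) | count_mem b x != 0].

Definition P (k : nat) (x : seq nat) : seq nat :=
  flatten [seq digits k (count_mem b x) ++ [:: b] | b <- occ_letters k x].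

(* Main.v *)
Require Import Defs.
From mathcomp Require Import all_boot zify.

Definition Q (a b : nat) : seq nat :=
  (if a != 0 then digits 2 a ++ [:: 1] else [::]) ++
  (if b != 0 then digits 2 b ++ [:: 0] else [::]).

Lemma PQ x : P 2 x = Q (count_mem 1 x) (count_mem 0 x).
Proof.
rewrite /P /occ_letters /Q /=.
by case: (count_mem 1 x != 0); case: (count_mem 0 x != 0); rewrite /= ?cats0.
Qed.

Lemma count_bin x : all (fun a => a < 2) x -> count_mem 1 x + count_mem 0 x = size x.
Proof.
elim: x => [|a x IH] //= /andP [ha hx]; rewrite -(IH hx).
by case: a ha => [|[|]] //= _; lia.
Qed.

Lemma digits_aux_size f c : c <= f -> size (digits_aux f 2 c) <= c %/ 2 + (c != 0).
Proof.
elim: f c => [|f IH] c hc /=; first by lia.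
case: eqP => [->|hc0] //=.
rewrite size_rcons.
have h1 : c %/ 2 <= f by lia.

idtac.
have := IH _ h1; case: (c %/ 2 =P 0) => [->|hm] /=; first by lia.
lia.
Qed.

Lemma digits_size c : size (digits 2 c) <= c %/ 2 + 1.
Proof. rewrite /digits; have := @digits_aux_size c c (leqnn c); case: c => [|c]; rewrite /=; lia. Qed.

Lemma digits_aux_bin f c : all (fun a => a < 2) (digits_aux f 2 c).
Proof.
elim: f c => [|f IH] c //=; case: eqP => // _.
by rewrite all_rcons IH ltn_pmod.
Qed.

Lemma digits_aux_val f c : c <= f ->
  foldl (fun acc d => acc * 2 + d) 0 (digits_aux f 2 c) = c.
Proof.
elim: f c => [|f IH] c hc /=; first by lia.
case: eqP => [->|hc0] //=.
rewrite foldl_rcons IH; last by lia.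
by rewrite -divn_eq.
Qed.

Lemma Q_bin a b : all (fun a => a < 2) (Q a b).
Proof.
rewrite /Q all_cat; apply/andP; split; case: (_ != 0) => //;
by rewrite all_cat digits_aux_bin.
Qed.

Lemma P_word x : word 2 x -> word 2 (P 2 x).
Proof.
move=> /andP [hs ha]; rewrite /word PQ Q_bin andbT.
have := count_bin x ha; rewrite /Q.
case: (count_mem 1 x) => [|a]; case: (count_mem 0 x) => [|b] /=; rewrite ?size_cat /=; lia.
Qed.

Lemma P_size x : word 2 x -> 9 <= size x -> size (P 2 x) < size x.
Proof.
move=> /andP [hs ha] h9; rewrite PQ -(count_bin x ha) /Q.
set a := count_mem 1 x; set b := count_mem 0 x.
have da := digits_size a; have db := digits_size b.
rewrite size_cat.
case: (a != 0); case: (b != 0); rewrite /= ?size_cat /=; rewrite -(count_bin x ha) in h9; lia.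
Qed.

Lemma all1 x : all (fun a => a < 2) x -> count_mem 0 x = 0 -> x = nseq (size x) 1.
Proof.
elim: x => [|a x IH] //= /andP [ha hx].
case: a ha => [|[|]] //= _ h; by rewrite -IH.
Qed.

Lemma not111 x : word 2 x -> x <> [:: 1; 1; 1] -> P 2 x <> [:: 1; 1; 1].
Proof.
move=> /andP [hs ha] hx; rewrite PQ /Q => hP.
case hb: (count_mem 0 x != 0) hP.
  move=> /(congr1 (last 7)); rewrite last_cat [in X in X = _]/= .
  by rewrite last_cat.
case hA: (count_mem 1 x != 0); rewrite /= ?cats0; last by [].
rewrite cats1 -[X in _ = X]/(rcons [:: 1; 1] 1) => /rcons_inj; case=> hd.
have := @digits_aux_val _ _ (leqnn (count_mem 1 x)).
rewrite -/(digits 2 _) hd /= => h3.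
apply: hx; move/negbFE/eqP: hb => hb.
rewrite (all1 x ha hb) -(count_bin x ha) hb -h3.
by [].
Qed.

Definition target := [:: 1; 0; 0; 1; 1; 1; 0].

Definition fincheck : bool :=
  all (fun a => all (fun b => (8 < a + b) || ((a == 3) && (b == 0)) ||
     ((a == 0) && (b == 0)) || (iter 9 (P 2) (Q a b) == target)) (iota 0 9)) (iota 0 9).

Lemma fincheck_ok : fincheck.
Proof. by vm_compute. Qed.

Lemma P_target : P 2 target = target.
Proof. by vm_compute. Qed.

Lemma iter_target n : iter n (P 2) target = target.
Proof. by elim: n => //= n ->; exact: P_target. Qed.

Lemma small y : word 2 y -> y <> [:: 1; 1; 1] -> size y <= 8 ->
  iter 10 (P 2) y = target.
Proof.
move=> hw hy hs; rewrite iterSr PQ.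
have /andP [hs0 ha] := hw.
have hc := count_bin y ha.
set a := count_mem 1 y in hc *; set b := count_mem 0 y in hc *.
have := fincheck_ok; rewrite /fincheck => /allP /(_ a).
rewrite mem_iota => /(_ ltac:(lia)) /allP /(_ b).
rewrite mem_iota => /(_ ltac:(lia)).
have h8 : (8 < a + b) = false by apply/negbTE; rewrite -leqNgt; lia.
have h0 : ((a == 0) && (b == 0)) = false.
  by apply/negbTE/negP => /andP [/eqP h1 /eqP h2]; lia.
have h3 : ((a == 3) && (b == 0)) = false.
  apply/negbTE/negP => /andP [/eqP h1 /eqP h2]; apply: hy.
  by rewrite (all1 y ha h2) -hc h1 h2.
by rewrite h8 h0 h3 /= => /eqP.
Qed.

Lemma shrink n x : word 2 x -> x <> [:: 1; 1; 1] -> size x <= n + 8 ->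
  exists m, [/\ word 2 (iter m (P 2) x), iter m (P 2) x <> [:: 1; 1; 1] &
               size (iter m (P 2) x) <= 8].
Proof.
elim: n x => [|n IH] x hw hx hs; first by exists 0.
case: (leqP (size x) 8) => h8; first by exists 0.
have hs' : size (P 2 x) <= n + 8 by have := P_size x hw h8; lia.
have [m [h1 h2 h3]] := IH _ (P_word x hw) (not111 x hw hx) hs'.
by exists m.+1; rewrite iterSr.
Qed.

Lemma converge x : word 2 x -> x <> [:: 1; 1; 1] ->
  exists N, forall n, N <= n -> iter n (P 2) x = target.
Proof.
move=> hw hx.
have [m [h1 h2 h3]] := @shrink (size x) x hw hx ltac:(lia).
exists (10 + m) => n hn.
have -> : n = (n - (10 + m)) + 10 + m by lia.
by rewrite !iterD small // iter_target.
Qed.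

Lemma P111 : P 2 [:: 1; 1; 1] = [:: 1; 1; 1].
Proof. by vm_compute. Qed.

Theorem corollary1 :
  (* every orbit other than that of 111 is eventually constant 1001110 *)
  (forall x0 : seq nat, word 2 x0 -> x0 <> [:: 1; 1; 1] ->
     exists N : nat, forall n : nat, N <= n ->
       iter n (P 2) x0 = [:: 1; 0; 0; 1; 1; 1; 0]) /\
  (* the orbit of 111 is constant *)
  (forall n : nat, iter n (P 2) [:: 1; 1; 1] = [:: 1; 1; 1]) /\
  (* the only fixed points are 111 and 1001110 *)
  (forall x : seq nat, word 2 x ->
     (P 2 x = x <-> (x = [:: 1; 1; 1] \/ x = [:: 1; 0; 0; 1; 1; 1; 0]))) /\
  (* no cycles of length p >= 2 *)
  (forall (p : nat) (xs : seq (seq nat)), 2 <= p -> size xs = p ->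
     all (word 2) xs -> uniq xs ->
     (forall i : nat, i < p -> P 2 (nth [::] xs i) = nth [::] xs ((i + 1) %% p)) ->
     False).
Proof.
have orb111 : forall n, iter n (P 2) [:: 1; 1; 1] = [:: 1; 1; 1].
  by elim=> //= n ->; exact: P111.
split; first exact: converge.
split; first exact: orb111.
split.
  move=> x hw; split.
    move=> hP; case: (altP (x =P [:: 1; 1; 1])) => [->|hx]; first by left.
    right; have [N hN] := converge x hw (elimN eqP hx).
    have hfix : forall n, iter n (P 2) x = x by elim=> //= n ->.
    by have := hN N (leqnn N); rewrite hfix => ->.
  by case=> ->; vm_compute.
move=> p xs hp hsz hall huniq hcyc.
have hp0 : 0 < p by lia.
have hit : forall i, iter i (P 2) (nth [::] xs 0) = nth [::] xs (i %% p).
  elim=> [|i IH]; first by rewrite mod0n.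
  rewrite iterS IH hcyc ?ltn_pmod //.
  by rewrite modnDml addn1.
have hw0 : word 2 (nth [::] xs 0) by apply: (allP hall); rewrite mem_nth // hsz.
have h01 : nth [::] xs 0 <> nth [::] xs 1.
  move=> /eqP; rewrite nth_uniq ?hsz //; lia.
case: (altP (nth [::] xs 0 =P [:: 1; 1; 1])) => [e|hx].
  apply: h01; have := hit 1; rewrite modn_small //= e P111 => <-; by [].
have [N hN] := converge _ hw0 (elimN eqP hx).
have e0 := hit (N * p); rewrite modnMl hN in e0; last first.
  by rewrite leq_pmulr.
apply: h01; have := hit 1; rewrite modn_small //= -e0 P_target => <-.
by [].
Qed.
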